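(* For all $m\in\mathbb{N}$, $\delta\in(0,1)$ and $\boldsymbol{\mu}\in\Delta_\mathbb{N}$, with $\boldsymbol{X}\sim\boldsymbol{\mu}^m$, with probability at least $1-\delta$, $$\|\widehat{\boldsymbol{\mu}}_m-\boldsymbol{\mu}\|_{TV}\ge\frac12\hat{\mathfrak{R}}_m(\boldsymbol{X})-3\sqrt{\frac{\log(2/\delta)}{m}}.$$
   Context: $\Delta_\mathbb{N}$ is the set of probability distributions on $\mathbb{N}=\{1,2,\dots\}$; $\widehat{\boldsymbol{\mu}}_m(i)=\frac1m\sum_{t=1}^m\mathbb{I}\{X_t=i\}$; $\|\boldsymbol{\mu}-\boldsymbol{\nu}\|_{TV}=\frac12\sum_i|\boldsymbol{\mu}(i)-\boldsymbol{\nu}(i)|$. $\hat{\mathfrak{R}}_m(\boldsymbol{X})=\mathbb{E}_{\boldsymbol{\sigma}}\big[\sup_{f:\mathbb{N}\to\{0,1\}}\frac1m\sum_{t=1}^m\sigma_tf(X_t)\big]$ with $\boldsymbol{\sigma}$ uniform on $\{-1,1\}^m$. $\log$ is natural. *)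

(* Defs.v *)
From HB Require Import structures.
From mathcomp Require Import all_boot all_order all_algebra.
From mathcomp Require Import all_classical all_reals all_analysis.
Set Implicit Arguments. Unset Strict Implicit. Unset Printing Implicit Defensive.
Import Order.TTheory GRing.Theory Num.Theory.
Local Open Scope classical_set_scope.
Local Open Scope ring_scope.

Section Defs.
Variable R : realType.

(* A probability distribution on N = {1,2,...}, represented as a function on
   Rocq's nat with no mass at 0. *)
Definition is_distrN (mu : nat -> R) : Prop :=
  [/\ forall i, 0 <= mu i, mu 0%N = 0 &
      (\esum_(i in [set: nat]) (mu i)%:E = 1)%E].

Definition prob_prod (m : nat) (mu : nat -> R) (E : set {ffun 'I_m -> nat}) : \bar R :=
  \esum_(x in E) (\prod_(t < m) mu (x t))%:E.

Definition emp (m : nat) (x : {ffun 'I_m -> nat}) (i : nat) : R :=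
  (m%:R)^-1 * (#|[set t : 'I_m | x t == i]|)%:R.

(* Total variation distance (as an extended real, a possibly infinite sum
   that is in fact finite). *)
Definition tv_dist (p q : nat -> R) : \bar R :=
  ((2 : R)^-1)%:E * \esum_(i in [set: nat]) (`| p i - q i |)%:E.

Definition sgn (b : bool) : R := if b then 1 else -1.

Definition emp_rademacher (m : nat) (x : {ffun 'I_m -> nat}) : R :=
  ((2 : R) ^+ m)^-1 *
  \sum_(s : {ffun 'I_m -> bool})
     sup [set (m%:R)^-1 * \sum_(t < m) sgn (s t) * (f (x t) : nat)%:R
         | f in [set: nat -> bool]].

End Defs.
Arguments prob_prod {R m}.
Arguments emp {R m}.
Arguments tv_dist {R}.
Arguments emp_rademacher {R m}.
Arguments is_distrN {R}.

(* Main.v *)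
Require Import Defs.
Set Warnings "-notation-overridden,-ambiguous-paths,-notation-incompatible-prefix,-deprecated".
From HB Require Import structures.
From mathcomp Require Import all_boot all_order all_algebra.
From mathcomp Require Import all_classical all_reals all_analysis.
From mathcomp Require Import ring lra.
Set Implicit Arguments. Unset Strict Implicit. Unset Printing Implicit Defensive.
Import Order.TTheory GRing.Theory Num.Theory.
Local Open Scope ring_scope.
Section A.
Variable R : realType.

Lemma expR_le_inv (u : R) : u < 1 -> expR u <= (1 - u)^-1.
Proof.
move=> hu.
have h1 := expR_ge1Dx (- u).
rewrite expRN in h1.
have hp : 0 < 1 - u by lra.
rewrite -(invrK (expR u)) lef_pV2 ?posrE ?invr_gt0 ?expR_gt0 //.

Qed.

Lemma expR_le_quad (u : R) : -(1/5) <= u <= 1/5 -> expR u <= 1 + u + 9/10 * u^+2.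
Proof.
move=> /andP[hu1 hu2].
have h := expR_le_inv (u := u/2) ltac:(lra).
have e : expR u = expR (u/2) * expR (u/2) by rewrite -expRD; congr expR; field.
have hp : 0 < 1 - u/2 by lra.
have h0 : 0 <= expR (u/2) := expR_ge0 _.
apply: (le_trans (y := (1 - u/2)^-1 * (1 - u/2)^-1)).
  by rewrite e; apply: ler_pM.
rewrite -invrM ?unitfE ?gt_eqF //.
have hq : 0 < (1 - u / 2) * (1 - u / 2) by apply: mulr_gt0.
rewrite -(ler_pM2r hq) mulVf ?gt_eqF //.
nra.
Qed.

End A.

Section B.
Variable R : realType.
Variable T : finType.
Variable p : T -> R.
Hypothesis p_ge0 : forall i, 0 <= p i.
Hypothesis p_sum1 : \sum_i p i = 1.

Definition W m (x : {ffun 'I_m -> T}) : R := \prod_(t < m) p (x t).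
Definition Ex m (G : {ffun 'I_m -> T} -> R) : R := \sum_x W x * G x.
Definition upd m (x : {ffun 'I_m -> T}) (i : 'I_m) (y : T) : {ffun 'I_m -> T} :=
  [ffun j => if j == i then y else x j].
Definition bdiff m (c : R) (G : {ffun 'I_m -> T} -> R) :=
  forall x i y, G x - G (upd x i y) <= c.
Definition fcons m (y : T) (r : {ffun 'I_m -> T}) : {ffun 'I_m.+1 -> T} :=
  [ffun i => if unlift ord0 i is Some j then r j else y].
Definition ftail m (x : {ffun 'I_m.+1 -> T}) : {ffun 'I_m -> T} :=
  [ffun j => x (lift ord0 j)].

Lemma W_ge0 m x : 0 <= @W m x.
Proof. by apply: prodr_ge0 => i _; apply: p_ge0. Qed.

Lemma sumW m : \sum_(x : {ffun 'I_m -> T}) W x = 1.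
Proof.
rewrite /W -(bigA_distr_bigA (fun (t : 'I_m) (i : T) => p i)) /=.
by rewrite big1 // => i _; rewrite p_sum1.
Qed.

Lemma marginal m (t : 'I_m) (g : T -> R) :
  \sum_(x : {ffun 'I_m -> T}) W x * g (x t) = \sum_i p i * g i.
Proof.
pose F := fun (u : 'I_m) (i : T) => p i * (if u == t then g i else 1).
have -> : \sum_(x : {ffun 'I_m -> T}) W x * g (x t) =
          \sum_(x : {ffun 'I_m -> T}) \prod_u F u (x u).
  apply: eq_bigr => x _; rewrite /W /F (bigD1 t) //= (bigD1 t (P := predT)) //=.
  rewrite eqxx -mulrA [_ * g (x t)]mulrC mulrA; congr (_ * _).
  by apply: eq_bigr => u /negPf ->; rewrite mulr1.
rewrite -(bigA_distr_bigA F) (bigD1 t) //= [X in _ * X]big1 ?mulr1.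
  by apply: eq_bigr => i _; rewrite /F eqxx.
by move=> u /negPf hu; rewrite /F; under eq_bigr do rewrite hu mulr1; rewrite p_sum1.
Qed.

Lemma fcons0 m y (r : {ffun 'I_m -> T}) : fcons y r ord0 = y.
Proof. by rewrite /fcons ffunE unlift_none. Qed.

Lemma fconsS m y (r : {ffun 'I_m -> T}) j : fcons y r (lift ord0 j) = r j.
Proof. by rewrite /fcons ffunE liftK. Qed.

Lemma fconsK m (x : {ffun 'I_m.+1 -> T}) : fcons (x ord0) (ftail x) = x.
Proof.
apply/ffunP => i; rewrite /fcons ffunE.
case: (unliftP ord0 i) => [j -> | ->] //.
by rewrite /ftail ffunE.
Qed.

Lemma sum_split m (F : {ffun 'I_m.+1 -> T} -> R) :
  \sum_x F x = \sum_y \sum_(r : {ffun 'I_m -> T}) F (fcons y r).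
Proof.
rewrite pair_big /=.
rewrite (reindex (fun yr : T * {ffun 'I_m -> T} => fcons yr.1 yr.2)) //=.
exists (fun x : {ffun 'I_m.+1 -> T} => (x ord0, ftail x)) => [[y r] _ | x _] /=; last exact: fconsK.
congr pair; first exact: fcons0.
by apply/ffunP => j; rewrite /ftail ffunE fconsS.
Qed.

Lemma W_cons m y (r : {ffun 'I_m -> T}) : W (fcons y r) = p y * W r.
Proof.
rewrite /W big_ord_recl fcons0; congr (_ * _).
by apply: eq_bigr => i _; rewrite fconsS.
Qed.

Lemma fcons_upd m y (r : {ffun 'I_m -> T}) j z :
  fcons y (upd r j z) = upd (fcons y r) (lift ord0 j) z.
Proof.
apply/ffunP => i; rewrite /upd /fcons !ffunE.
case: (unliftP ord0 i) => [k -> | ->] /=.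
  by rewrite (inj_eq (@lift_inj _ ord0)) ffunE.
by [].
Qed.

Lemma fcons_upd0 m y y' (r : {ffun 'I_m -> T}) :
  fcons y' r = upd (fcons y r) ord0 y'.
Proof.
apply/ffunP => i; rewrite /upd /fcons !ffunE.
case: (unliftP ord0 i) => [k -> | ->] //=.

Qed.


Lemma ex_split m (G : {ffun 'I_m.+1 -> T} -> R) :
  Ex G = \sum_y p y * Ex (fun r => G (fcons y r)).
Proof.
rewrite /Ex sum_split; apply: eq_bigr => y _; rewrite big_distrr /=.
by apply: eq_bigr => r _; rewrite W_cons mulrA.
Qed.

Lemma hoeff_step (Y : T -> R) s c : 0 <= s -> 0 <= c -> s * c <= 1/5 ->
  (forall y, -c <= Y y <= c) -> \sum_y p y * Y y = 0 ->
  \sum_y p y * expR (s * Y y) <= expR (9/10 * s^+2 * c^+2).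
Proof.
move=> s0 c0 sc hY hm.
apply: (le_trans (y := \sum_y p y * (1 + s * Y y + 9/10 * (s^+2 * c^+2)))).
  apply: ler_sum => y _; apply: ler_wpM2l => //.
  have /andP[h1 h2] := hY y.
  have h3 : s * Y y <= s * c by apply: ler_wpM2l.
  have h4 : - (s * c) <= s * Y y by rewrite -mulrN; apply: ler_wpM2l.
  apply: (le_trans (expR_le_quad _)).
    by apply/andP; split; lra.
  have : (s * Y y)^+2 <= s^+2 * c^+2 by nra.
  lra.
rewrite (eq_bigr (fun y => p y + s * (p y * Y y) + 9/10*(s^+2*c^+2) * p y)); last first.
  by move=> y _; ring.
rewrite !big_split /= -!mulr_sumr hm p_sum1 mulr0 addr0 mulr1.
by rewrite mulrA; exact: expR_ge1Dx.
Qed.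

Lemma mcdiarmid m s c (G : {ffun 'I_m -> T} -> R) :
  0 <= s -> 0 <= c -> s * c <= 1/5 -> bdiff c G ->
  \sum_x W x * expR (s * (G x - Ex G)) <= expR (9/10 * s^+2 * c^+2 * m%:R).
Proof.
move=> s0 c0 sc; elim: m G => [|m IH] G hG.
  have xE : forall x y : {ffun 'I_0 -> T}, x = y by move=> x y; apply/ffunP => -[].
  rewrite mulr0 expR0 -[leRHS](sumW 0) le_eqVlt; apply/orP; left; apply/eqP/eq_bigr => x _.
  have -> : Ex G = G x.
    rewrite /Ex (eq_bigr (fun y => W y * G x)); last by move=> y _; rewrite (xE y x).
    by rewrite -mulr_suml sumW mul1r.
  by rewrite subrr mulr0 expR0 mulr1.
set a := 9/10 * s^+2 * c^+2.
pose H y := Ex (fun r => G (fcons y r)).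
have EG : Ex G = \sum_y p y * H y := ex_split G.
have Hd : forall y y', H y - H y' <= c.
  move=> y y'; rewrite /H /Ex -sumrB.
  apply: (le_trans (y := \sum_(r : {ffun 'I_m -> T}) W r * c)); last first.
    by rewrite -mulr_suml sumW mul1r.
  apply: ler_sum => r _; rewrite -mulrBr; apply: ler_wpM2l; first exact: W_ge0.
  by rewrite (fcons_upd0 y y'); apply: hG.
rewrite sum_split.
apply: (le_trans (y := \sum_y p y * expR (s * (H y - Ex G)) * expR (a * m%:R))).
  apply: ler_sum => y _.
  have -> : \sum_r W (fcons y r) * expR (s * (G (fcons y r) - Ex G)) =
    p y * expR (s * (H y - Ex G)) *
      \sum_(r : {ffun 'I_m -> T}) W r * expR (s * (G (fcons y r) - H y)).
    rewrite mulr_sumr; apply: eq_bigr => r _; rewrite W_cons.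
    have -> : s * (G (fcons y r) - Ex G) = s * (H y - Ex G) + s * (G (fcons y r) - H y)
      by ring.
    rewrite expRD; ring.
  apply: ler_wpM2l; first by apply: mulr_ge0 => //; apply: expR_ge0.
  apply: IH => r i z; rewrite fcons_upd; exact: hG.
rewrite -mulr_suml (_ : (m.+1)%:R = m%:R + 1 :> R); last by rewrite -addn1 natrD.
rewrite mulrDr mulr1 expRD mulrC.
apply: ler_wpM2l; first exact: expR_ge0.
apply: hoeff_step => //.
  move=> y; rewrite EG.
  have -> : H y - \sum_y0 p y0 * H y0 = \sum_y0 p y0 * (H y - H y0).
    rewrite [RHS](eq_bigr (fun y0 => p y0 * H y - p y0 * H y0)); last by move=> ? _; ring.
    by rewrite sumrB -mulr_suml p_sum1 mul1r.
  apply/andP; split.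
    rewrite -[X in - X]mul1r -p_sum1 mulr_suml -sumrN; apply: ler_sum => y0 _.
    rewrite -mulrN; apply: ler_wpM2l => //; have := Hd y0 y; lra.
  rewrite -[X in _ <= X]mul1r -p_sum1 mulr_suml; apply: ler_sum => y0 _.
  by apply: ler_wpM2l => //; apply: Hd.
rewrite EG [LHS](eq_bigr (fun y => p y * H y - p y * \sum_y0 p y0 * H y0)); last by move=> ? _; ring.
by rewrite sumrB -mulr_suml p_sum1 mul1r subrr.
Qed.

Lemma chernoff m s c eps (G : {ffun 'I_m -> T} -> R) :
  0 <= s -> 0 <= c -> s * c <= 1/5 -> bdiff c G ->
  \sum_(x | eps <= G x - Ex G) W x <= expR (- (s * eps)) * expR (9/10 * s^+2 * c^+2 * m%:R).
Proof.
move=> s0 c0 sc hG.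
apply: (le_trans _ (ler_wpM2l (expR_ge0 _) (mcdiarmid s0 c0 sc hG))).
rewrite mulr_sumr.
apply: (le_trans (y := \sum_(x | eps <= G x - Ex G) expR (- (s * eps)) * (W x * expR (s * (G x - Ex G))))).
  apply: ler_sum => x hx.
  rewrite mulrCA -[leLHS]mulr1; apply: ler_wpM2l; first exact: W_ge0.
  rewrite -expRD -expR0 ler_expR.
  have : s * eps <= s * (G x - Ex G) by apply: ler_wpM2l.
  lra.
rewrite [leRHS](bigID (fun x => eps <= G x - Ex G)) /= lerDl.
apply: sumr_ge0 => x _; apply: mulr_ge0; first exact: expR_ge0.
apply: mulr_ge0; [exact: W_ge0 | exact: expR_ge0].
Qed.

End B.
Local Open Scope classical_set_scope.

Section Sups.
Variable R : realType.

Lemma sup_img_ub (phi : (nat -> bool) -> R) B :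
  (forall f, phi f <= B) -> sup [set phi f | f in [set: nat -> bool]] <= B.
Proof.
move=> hB; apply: ge_sup; first by exists (phi (fun _ => false)); exists (fun _ => false).
by move=> _ [f _ <-]; apply: hB.
Qed.

Lemma sup_img_ge (phi : (nat -> bool) -> R) B f0 :
  (forall f, phi f <= B) -> phi f0 <= sup [set phi f | f in [set: nat -> bool]].
Proof.
move=> hB; apply: ub_le_sup; last by exists f0.
by exists B => _ [f _ <-]; apply: hB.
Qed.

Lemma sup_img_le (phi psi : (nat -> bool) -> R) B d :
  (forall f, psi f <= B) -> (forall f, phi f <= psi f + d) ->
  sup [set phi f | f in [set: nat -> bool]] <= sup [set psi f | f in [set: nat -> bool]] + d.
Proof.
move=> hB hd; apply: sup_img_ub => f.
apply: (le_trans (hd f)); rewrite lerD2r; exact: sup_img_ge hB.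
Qed.

Lemma sgn_norm b : `|sgn R b| = 1.
Proof. by case: b; rewrite /sgn ?normrN normr1. Qed.

Lemma sgn_mul_le b (a : R) : 0 <= a <= 1 -> sgn R b * a <= 1.
Proof. by case: b => /andP[h1 h2]; rewrite /sgn; lra. Qed.

End Sups.

Lemma in_mkset_bool (T : Type) (P : T -> bool) t : (t \in [set u | P u]) = P t.
Proof. by apply/idP/idP; rewrite in_setE. Qed.

Section C.
Variable R : realType.
Variables (n m : nat).
Hypothesis m_gt0 : (0 < m)%N.
Variable p : 'I_n -> R.
Hypothesis p_ge0 : forall i, 0 <= p i.
Hypothesis p_sum1 : \sum_i p i = 1.

Definition X (x : {ffun 'I_m -> 'I_n}) : {ffun 'I_m -> nat} := [ffun t => val (x t)].

Definition Phi (x : {ffun 'I_m -> 'I_n}) (s : {ffun 'I_m -> bool}) (f : nat -> bool) : R :=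
  (m%:R)^-1 * \sum_(t < m) sgn R (s t) * (f (X x t) : nat)%:R.

Definition TVp (x : {ffun 'I_m -> 'I_n}) : R := 2^-1 * \sum_i `|emp (X x) (val i) - p i|.
Definition Rad (x : {ffun 'I_m -> 'I_n}) : R := emp_rademacher (X x).
Definition Gf (x : {ffun 'I_m -> 'I_n}) : R := 2^-1 * Rad x - TVp x.

Lemma mR_gt0 : 0 < m%:R :> R. Proof. by rewrite ltr0n. Qed.

Lemma RadE x : Rad x = (2 ^+ m)^-1 * \sum_s sup [set Phi x s f | f in [set: nat -> bool]].
Proof. by []. Qed.

Lemma Phi_le1 x s f : Phi x s f <= 1.
Proof.
rewrite /Phi; have hm := mR_gt0.
rewrite ler_pdivrMl // mulr1.
apply: (le_trans (y := \sum_(t < m) (1 : R))); last by rewrite sumr_const card_ord.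
apply: ler_sum => t _; apply: sgn_mul_le.
by case: (f _); rewrite /= ?lexx ?ler01.
Qed.

Lemma card_sgn : #|{ffun 'I_m -> bool}| = (2 ^ m)%N.
Proof. by rewrite card_ffun card_bool card_ord. Qed.

Lemma Rad_le1 x : Rad x <= 1.
Proof.
rewrite RadE ler_pdivrMl ?exprn_gt0 // mulr1.
apply: (le_trans (y := \sum_(s : {ffun 'I_m -> bool}) (1 : R))).
  by apply: ler_sum => s _; apply: sup_img_ub => f; apply: Phi_le1.
by rewrite sumr_const card_sgn natrX.
Qed.

Lemma TVp_ge0 x : 0 <= TVp x.
Proof. by apply: mulr_ge0 => //; apply: sumr_ge0 => i _. Qed.

Lemma Gf_le x : Gf x <= 2^-1.
Proof. have := Rad_le1 x; have := TVp_ge0 x; rewrite /Gf; lra. Qed.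

Lemma empE x (i : 'I_n) : emp (X x) (val i) = (m%:R)^-1 * \sum_t (x t == i)%:R :> R.
Proof.
rewrite /emp; congr (_ * _).
rewrite -sum1_card natr_sum big_mkcond /=; apply: eq_bigr => t _.
by rewrite in_mkset_bool /X ffunE val_eqE; case: (x t == i).
Qed.

Lemma emp_sum1 x : \sum_(i : 'I_n) emp (X x) (val i) = 1 :> R.
Proof.
under eq_bigr do rewrite empE.
rewrite -mulr_sumr exchange_big /=.
rewrite (eq_bigr (fun _ => 1)); last first.
  move=> t _; rewrite (bigD1 (x t)) //= eqxx big1 ?addr0 //.
  by move=> i; rewrite eq_sym => /negPf ->.
by rewrite sumr_const card_ord mulVf // gt_eqF // mR_gt0.
Qed.


Lemma sum_upd (F : 'I_m -> 'I_n -> R) x i y :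
  \sum_t F t (upd x i y t) - \sum_t F t (x t) = F i y - F i (x i).
Proof.
rewrite -sumrB (bigD1 i) //= big1 ?addr0.
  by rewrite /upd ffunE eqxx.
by move=> t /negPf hti; rewrite /upd ffunE hti subrr.
Qed.

Lemma Phi_upd x i y s f : Phi x s f <= Phi (upd x i y) s f + (m%:R)^-1.
Proof.
rewrite /Phi -lerBlDl -mulrBr /X.
under eq_bigr do rewrite ffunE.
under [X in _ - X]eq_bigr do rewrite ffunE.
rewrite -opprB (sum_upd (fun t z => sgn R (s t) * (f (val z) : nat)%:R) x i y).
rewrite ler_pdivrMl ?mR_gt0 // mulfV ?gt_eqF ?mR_gt0 //.
by case: (s i); case: (f _); case: (f _); rewrite /sgn /= ?mulr1n ?mulr0n; lra.
Qed.

Lemma Rad_upd x i y : Rad x <= Rad (upd x i y) + (m%:R)^-1.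
Proof.
rewrite !RadE -lerBlDl -mulrBr -sumrB.
rewrite ler_pdivrMl ?exprn_gt0 //.
apply: (le_trans (y := \sum_(s : {ffun 'I_m -> bool}) (m%:R)^-1)).
  apply: ler_sum => s _; rewrite lerBlDl.
  apply: (sup_img_le (B := 1)) => f; first exact: Phi_le1.
  exact: Phi_upd.
by rewrite sumr_const card_sgn -[X in X <= _]mulr_natl natrX mulrC.
Qed.

Lemma emp_upd x i y (j : 'I_n) :
  emp (X (upd x i y)) (val j) - emp (X x) (val j) = (m%:R)^-1 * ((y == j)%:R - (x i == j)%:R) :> R.
Proof.
rewrite !empE -mulrBr; congr (_ * _).
exact: (sum_upd (fun _ z => (z == j)%:R)).
Qed.

Lemma TVp_upd x i y : TVp (upd x i y) <= TVp x + (m%:R)^-1.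
Proof.
rewrite /TVp.
apply: (le_trans (y := 2^-1 * \sum_j (`|emp (X x) (val j) - p j| +
          (m%:R)^-1 * ((y == j)%:R + (x i == j)%:R)))).
  apply: ler_wpM2l => //; apply: ler_sum => j _.
  have -> : emp (X (upd x i y)) (val j) - p j =
     (emp (X x) (val j) - p j) + (emp (X (upd x i y)) (val j) - emp (X x) (val j)) by ring.
  apply: (le_trans (ler_normD _ _)); rewrite lerD2l emp_upd normrM.
  rewrite ger0_norm ?invr_ge0 ?ler0n //; apply: ler_wpM2l; first by rewrite invr_ge0 ler0n.
  by case: (y == j); case: (x i == j); rewrite /= ?mulr1n ?mulr0n ?subrr ?subr0 ?sub0r ?normrN ?normr0 ?normr1; lra.
rewrite big_split /= mulrDr lerD2l -mulr_sumr big_split /=.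
have h1 : forall z : 'I_n, \sum_j (z == j)%:R = 1 :> R.
  move=> z; rewrite (bigD1 z) //= eqxx big1 ?addr0 //.
  by move=> j /negPf; rewrite eq_sym => ->.
rewrite !h1; lra.
Qed.

Lemma Gf_bdiff : bdiff (3 / (2 * m%:R)) Gf.
Proof.
move=> x i y; rewrite /Gf.
have h1 := Rad_upd x i y.
have h2 := TVp_upd x i y.
have -> : 3 / (2 * m%:R) = 2^-1 * (m%:R)^-1 + (m%:R)^-1 :> R.
  by field; rewrite gt_eqF ?mR_gt0.
have h3 : 0 < (m%:R)^-1 :> R by rewrite invr_gt0 mR_gt0.
lra.
Qed.


Definition pp (a : R) := (`|a| + a) / 2.
Lemma pp_ge (a : R) : a <= pp a.
Proof. rewrite /pp; have := ler_norm a; lra. Qed.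
Lemma pp_ge0 (a : R) : 0 <= pp a.
Proof. rewrite /pp; have := ler_norm (- a); rewrite normrN; lra. Qed.
Lemma ppD (a b : R) : pp (a + b) <= pp a + pp b.
Proof. rewrite /pp; have := ler_normD a b; lra. Qed.
Lemma ppM (c a : R) : 0 <= c -> pp (c * a) = c * pp a.
Proof. by move=> c0; rewrite /pp normrM ger0_norm //; field. Qed.
Lemma pp_sum (a : 'I_n -> R) : \sum_i a i = 0 -> \sum_i pp (a i) = 2^-1 * \sum_i `|a i|.
Proof.
move=> h; rewrite /pp (eq_bigr (fun i => 2^-1 * `|a i| + 2^-1 * a i)); last by move=> i _; field.
by rewrite big_split /= -!mulr_sumr h mulr0 addr0.
Qed.

Definition Wp := W p.
Definition Pf (f : nat -> bool) : R := \sum_i p i * (f (val i) : nat)%:R.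
Definition Ssum (s : {ffun 'I_m -> bool}) : R := \sum_t sgn R (s t).
Definition Psi (x x' : {ffun 'I_m -> 'I_n}) (s : {ffun 'I_m -> bool}) : R :=
  \sum_i pp (\sum_t sgn R (s t) * ((x t == i)%:R - (x' t == i)%:R)).

Lemma bool01 (b : bool) : 0 <= (b : nat)%:R :> R /\ (b : nat)%:R <= 1 :> R.
Proof. by case: b; rewrite /= ?mulr1n ?mulr0n; split; lra. Qed.

Lemma Pf_01 f : 0 <= Pf f <= 1.
Proof.
apply/andP; split.
  by apply: sumr_ge0 => i _; apply: mulr_ge0 => //; case: (bool01 (f (val i))).
rewrite -p_sum1; apply: ler_sum => i _; rewrite -[leRHS]mulr1; apply: ler_wpM2l => //.
by case: (bool01 (f (val i))).
Qed.

Lemma f_expand (f : nat -> bool) (z : 'I_n) :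
  (f (val z) : nat)%:R = \sum_i (f (val i) : nat)%:R * (z == i)%:R :> R.
Proof.
rewrite (bigD1 z) //= eqxx mulr1 big1 ?addr0 //.
by move=> i; rewrite eq_sym => /negPf ->; rewrite mulr0.
Qed.

Lemma claimB (x x' : {ffun 'I_m -> 'I_n}) (s : {ffun 'I_m -> bool}) (f : nat -> bool) :
  \sum_t sgn R (s t) * ((f (val (x t)) : nat)%:R - (f (val (x' t)) : nat)%:R) <= Psi x x' s.
Proof.
have -> : \sum_t sgn R (s t) * ((f (val (x t)) : nat)%:R - (f (val (x' t)) : nat)%:R) =
  \sum_i (f (val i) : nat)%:R * \sum_t sgn R (s t) * ((x t == i)%:R - (x' t == i)%:R).
  under eq_bigr do rewrite (f_expand f (x _)) (f_expand f (x' _)) -sumrB mulr_sumr.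
  rewrite exchange_big /=; apply: eq_bigr => i _; rewrite mulr_sumr.
  by apply: eq_bigr => t _; ring.
apply: ler_sum => i _; have [h0 h1] := bool01 (f (val i)).
case: (f (val i)) h0 h1 => /= _ _; rewrite ?mulr1n ?mulr0n ?mul1r ?mul0r.
  exact: pp_ge.
exact: pp_ge0.
Qed.

Lemma claimA (x : {ffun 'I_m -> 'I_n}) (s : {ffun 'I_m -> bool}) (f : nat -> bool) :
  \sum_t sgn R (s t) * (f (X x t) : nat)%:R =
  \sum_(x' : {ffun 'I_m -> 'I_n}) Wp x' *
     \sum_t sgn R (s t) * ((f (val (x t)) : nat)%:R - (f (val (x' t)) : nat)%:R)
  + Pf f * Ssum s.
Proof.
have e1 : forall t, \sum_(x' : {ffun 'I_m -> 'I_n}) Wp x' * (f (val (x' t)) : nat)%:R = Pf f.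
  by move=> t; rewrite /Wp (marginal p_sum1 t (fun z => (f (val z) : nat)%:R)).
under [X in _ = X + _]eq_bigr do rewrite mulr_sumr.
rewrite exchange_big /=.
rewrite /Ssum mulr_sumr -big_split /=; apply: eq_bigr => t _.
rewrite (eq_bigr (fun x' => sgn R (s t) * (f (val (x t)) : nat)%:R * Wp x' -
                           sgn R (s t) * (Wp x' * (f (val (x' t)) : nat)%:R))); last first.
  by move=> x' _; ring.
rewrite sumrB -mulr_sumr -mulr_sumr e1 /Wp sumW // /X ffunE; ring.
Qed.

Lemma Phi_bound (x : {ffun 'I_m -> 'I_n}) (s : {ffun 'I_m -> bool}) (f : nat -> bool) :
  Phi x s f <= (m%:R)^-1 * (\sum_(x' : {ffun 'I_m -> 'I_n}) Wp x' * Psi x x' s + `|Ssum s|).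
Proof.
rewrite /Phi claimA; apply: ler_wpM2l; first by rewrite invr_ge0 ler0n.
apply: lerD.
  apply: ler_sum => x' _; apply: ler_wpM2l; [exact: W_ge0 | exact: claimB].
have /andP[h0 h1] := Pf_01 f.
rewrite -[leRHS]mul1r; apply: (le_trans (ler_norm _)); rewrite normrM.
apply: ler_wpM2r => //; rewrite ger0_norm //.
Qed.


Lemma Rad_bound (x : {ffun 'I_m -> 'I_n}) :
  Rad x <= (2 ^+ m)^-1 * \sum_(s : {ffun 'I_m -> bool})
     (m%:R)^-1 * (\sum_(x' : {ffun 'I_m -> 'I_n}) Wp x' * Psi x x' s + `|Ssum s|).
Proof.
rewrite RadE; apply: ler_wpM2l; first by rewrite invr_ge0 exprn_ge0.
apply: ler_sum => s _; apply: sup_img_ub => f; exact: Phi_bound.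
Qed.

Definition swp (s : {ffun 'I_m -> bool}) (pr : {ffun 'I_m -> 'I_n} * {ffun 'I_m -> 'I_n}) :=
  ([ffun t => if s t then pr.1 t else pr.2 t], [ffun t => if s t then pr.2 t else pr.1 t]).

Lemma swp_inv s : involutive (swp s).
Proof.
move=> [x x']; rewrite /swp /=; congr pair; apply/ffunP => t; rewrite !ffunE;
  by case: (s t).
Qed.

Definition one_s : {ffun 'I_m -> bool} := [ffun => true].

Lemma swap_sum s :
  \sum_(x : {ffun 'I_m -> 'I_n}) \sum_(x' : {ffun 'I_m -> 'I_n}) Wp x * Wp x' * Psi x x' s =
  \sum_(x : {ffun 'I_m -> 'I_n}) \sum_(x' : {ffun 'I_m -> 'I_n}) Wp x * Wp x' * Psi x x' one_s.
Proof.
rewrite !pair_big /= [RHS](reindex_inj (inv_inj (swp_inv s))) /=.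
apply: eq_bigr => -[x x'] _ /=; congr (_ * _).
  rewrite /Wp /W -!big_split /=; apply: eq_bigr => t _; rewrite !ffunE.
  by case: (s t) => //; rewrite mulrC.
rewrite /Psi; apply: eq_bigr => i _; congr pp; apply: eq_bigr => t _.
by rewrite !ffunE; case: (s t); rewrite /sgn; ring.
Qed.

Lemma Psi_one x x' : Psi x x' one_s <= m%:R * (TVp x + TVp x').
Proof.
have hm : 0 <= m%:R :> R by rewrite ler0n.
rewrite /Psi /TVp.
have e : forall i : 'I_n, \sum_t sgn R (one_s t) * ((x t == i)%:R - (x' t == i)%:R) =
   m%:R * ((emp (X x) (val i) - p i) + (p i - emp (X x') (val i))).
  move=> i; rewrite !empE.
  have hm0 : m%:R != 0 :> R by rewrite gt_eqF ?mR_gt0.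
  rewrite (eq_bigr (fun t => (x t == i)%:R - (x' t == i)%:R)); last first.
    by move=> t _; rewrite /one_s ffunE /sgn mul1r.
  rewrite sumrB; field => //.
under eq_bigr do rewrite e ppM //.
rewrite -mulr_sumr; apply: ler_wpM2l => //.
apply: (le_trans (y := \sum_i (pp (emp (X x) (val i) - p i) + pp (p i - emp (X x') (val i))))).
  by apply: ler_sum => i _; apply: ppD.
rewrite big_split /= !pp_sum.
- by under [X in _ + _ * X <= _]eq_bigr do rewrite distrC.
- by rewrite sumrB p_sum1 emp_sum1 subrr.
- by rewrite sumrB p_sum1 emp_sum1 subrr.
Qed.


Lemma ExRad_le :
  \sum_(x : {ffun 'I_m -> 'I_n}) Wp x * Rad x <=
  2 * \sum_(x : {ffun 'I_m -> 'I_n}) Wp x * TVp x +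
  (m%:R)^-1 * ((2 ^+ m)^-1 * \sum_(s : {ffun 'I_m -> bool}) `|Ssum s|).
Proof.
set c2 := (2 ^+ m)^-1 : R.
set mi := (m%:R)^-1 : R.
have hW : forall x, 0 <= Wp x by move=> x; apply: W_ge0.
apply: (le_trans (y := \sum_(x : {ffun 'I_m -> 'I_n}) Wp x * (c2 * \sum_(s : {ffun 'I_m -> bool})
     mi * (\sum_(x' : {ffun 'I_m -> 'I_n}) Wp x' * Psi x x' s + `|Ssum s|)))).
  by apply: ler_sum => x _; apply: ler_wpM2l => //; apply: Rad_bound.
set D := \sum_(x : {ffun 'I_m -> 'I_n}) \sum_(x' : {ffun 'I_m -> 'I_n}) Wp x * Wp x' * Psi x x' one_s.
have eq1 : \sum_(x : {ffun 'I_m -> 'I_n}) Wp x * (c2 * \sum_(s : {ffun 'I_m -> bool})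
     mi * (\sum_(x' : {ffun 'I_m -> 'I_n}) Wp x' * Psi x x' s + `|Ssum s|)) =
   \sum_(s : {ffun 'I_m -> bool}) c2 * mi * (D + `|Ssum s|).
  rewrite (eq_bigr (fun x => \sum_(s : {ffun 'I_m -> bool}) c2 * mi *
      (\sum_(x' : {ffun 'I_m -> 'I_n}) Wp x * Wp x' * Psi x x' s + Wp x * `|Ssum s|))); last first.
    move=> x _; rewrite mulr_sumr mulr_sumr; apply: eq_bigr => s _.
    rewrite [in RHS](eq_bigr (fun x' => Wp x * (Wp x' * Psi x x' s))); last first.
      by move=> x' _; rewrite mulrA.
    by rewrite -mulr_sumr; ring.
  rewrite exchange_big /=; apply: eq_bigr => s _.
  rewrite -mulr_sumr big_split /= -mulr_suml /Wp sumW // mul1r.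
  by rewrite swap_sum.
rewrite eq1 -mulr_sumr big_split /= sumr_const card_sgn.
have hD : D <= 2 * m%:R * \sum_(x : {ffun 'I_m -> 'I_n}) Wp x * TVp x.
  apply: (le_trans (y := \sum_(x : {ffun 'I_m -> 'I_n}) \sum_(x' : {ffun 'I_m -> 'I_n})
       Wp x * Wp x' * (m%:R * (TVp x + TVp x')))).
    apply: ler_sum => x _; apply: ler_sum => x' _; apply: ler_wpM2l; last exact: Psi_one.
    by apply: mulr_ge0.
  have -> : \sum_(x : {ffun 'I_m -> 'I_n}) \sum_(x' : {ffun 'I_m -> 'I_n})
       Wp x * Wp x' * (m%:R * (TVp x + TVp x')) =
     m%:R * (\sum_(x : {ffun 'I_m -> 'I_n}) Wp x * TVp x * \sum_(x' : {ffun 'I_m -> 'I_n}) Wp x' +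
             \sum_(x : {ffun 'I_m -> 'I_n}) Wp x * \sum_(x' : {ffun 'I_m -> 'I_n}) Wp x' * TVp x').
    rewrite -big_split /= mulr_sumr; apply: eq_bigr => x _.
    rewrite !mulr_sumr -big_split /= mulr_sumr; apply: eq_bigr => x' _; ring.
  rewrite /Wp sumW //.
  under eq_bigr do rewrite mulr1.
  rewrite -mulr_suml sumW // mul1r.
  by rewrite le_eqVlt; apply/orP; left; apply/eqP; ring.
rewrite -[D *+ _]mulr_natl natrX -/c2.
have hc2 : c2 * 2 ^+ m = 1 by rewrite mulVf // expf_neq0.
have hmi : 0 <= mi by rewrite invr_ge0 ler0n.
have hmi2 : mi * m%:R = 1 by rewrite mulVf // gt_eqF ?mR_gt0.
set S := \sum_(s : {ffun 'I_m -> bool}) `|Ssum s|.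
rewrite mulrDr (_ : c2 * mi * (2 ^+ m * D) = mi * D * (c2 * 2 ^+ m)); last by ring.
rewrite hc2 mulr1 (_ : c2 * mi * S = mi * (c2 * S)); last by ring.
rewrite lerD2r.
apply: (le_trans (ler_wpM2l hmi hD)).
by rewrite mulrA mulrCA hmi2 mulr1.
Qed.


Definition flip (t : 'I_m) (s : {ffun 'I_m -> bool}) : {ffun 'I_m -> bool} :=
  [ffun u => if u == t then ~~ s u else s u].

Lemma flip_inv t : involutive (flip t).
Proof.
move=> s; apply/ffunP => u; rewrite !ffunE.
by case: (u == t); rewrite ?negbK.
Qed.

Lemma sum_sgn_pair (t t' : 'I_m) :
  \sum_(s : {ffun 'I_m -> bool}) sgn R (s t) * sgn R (s t') =
  if t == t' then (2 ^ m)%:R else 0.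
Proof.
case: eqP => [<- | /eqP ntt].
  rewrite (eq_bigr (fun _ => 1)); last by move=> s _; case: (s t); rewrite /sgn; ring.
  by rewrite sumr_const card_sgn.
set S := \sum_(s : {ffun 'I_m -> bool}) _.
have : S = - S.
  rewrite {1}/S (reindex_inj (inv_inj (flip_inv t))) /S -sumrN.
  apply: eq_bigr => s _; rewrite /flip !ffunE eqxx.
  have -> : (t' == t) = false by apply/negbTE; rewrite eq_sym.
  by case: (s t); rewrite /sgn /=; ring.
move=> h; have : 2 * S = 0 by rewrite mulr2n; lra.
by move/eqP; rewrite mulf_eq0 pnatr_eq0 /= => /eqP.
Qed.

Lemma sum_S2 : \sum_(s : {ffun 'I_m -> bool}) Ssum s ^+ 2 = m%:R * (2 ^ m)%:R.
Proof.
rewrite (eq_bigr (fun s : {ffun 'I_m -> bool} => \sum_t \sum_t' sgn R (s t) * sgn R (s t'))); last first.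
  move=> s _; rewrite expr2 /Ssum mulr_suml; apply: eq_bigr => t _.
  by rewrite mulr_sumr.
rewrite exchange_big /=.
rewrite (eq_bigr (fun _ => (2 ^ m)%:R)); last first.
  move=> t _; rewrite exchange_big /=.
  under eq_bigr do rewrite sum_sgn_pair.
  by rewrite -big_mkcond /= (big_pred1 t) // => i; rewrite eq_sym.
by rewrite sumr_const card_ord mulr_natl.
Qed.

Lemma sum_absS : \sum_(s : {ffun 'I_m -> bool}) `|Ssum s| <= (2 ^ m)%:R * Num.sqrt m%:R.
Proof.
have hs : 0 < Num.sqrt (m%:R : R) by rewrite sqrtr_gt0 mR_gt0.
have hss : Num.sqrt (m%:R : R) ^+ 2 = m%:R by rewrite sqr_sqrtr // ler0n.
rewrite -(ler_pM2r (mulr_gt0 (ltr0n R 2) hs)) mulr_suml.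
apply: (le_trans (y := \sum_(s : {ffun 'I_m -> bool}) (Ssum s ^+ 2 + m%:R))).
  apply: ler_sum => s _.
  have h1 : 0 <= (`|Ssum s| - Num.sqrt m%:R) ^+ 2 by apply: sqr_ge0.
  have h2 : `|Ssum s| ^+ 2 = Ssum s ^+ 2 by rewrite real_normK // num_real.
  nra.
rewrite big_split /= sum_S2 sumr_const card_sgn -[(m%:R : R) *+ (2 ^ m)]mulr_natl.
have h2m : 0 <= (2 ^ m)%:R :> R by rewrite ler0n.
set N := ((2 ^ m)%:R : R); set q := Num.sqrt (m%:R : R) in hss *.
have -> : N * q * (2 * q) = 2 * N * q ^+ 2 by ring.
rewrite hss; lra.
Qed.

Lemma ExG_le : \sum_(x : {ffun 'I_m -> 'I_n}) Wp x * Gf x <= (2 * Num.sqrt m%:R)^-1.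
Proof.
have hs : 0 < Num.sqrt (m%:R : R) by rewrite sqrtr_gt0 mR_gt0.
have hss : Num.sqrt (m%:R : R) ^+ 2 = m%:R by rewrite sqr_sqrtr // ler0n.
have e : \sum_(x : {ffun 'I_m -> 'I_n}) Wp x * Gf x =
   2^-1 * \sum_(x : {ffun 'I_m -> 'I_n}) Wp x * Rad x - \sum_(x : {ffun 'I_m -> 'I_n}) Wp x * TVp x.
  rewrite mulr_sumr -sumrB; apply: eq_bigr => x _; rewrite /Gf; ring.
rewrite e.
have h1 := ExRad_le.
have h2 := sum_absS.
set A := \sum_(x : {ffun 'I_m -> 'I_n}) Wp x * Rad x in h1 *.
set B := \sum_(x : {ffun 'I_m -> 'I_n}) Wp x * TVp x in h1 *.
set S := \sum_(s : {ffun 'I_m -> bool}) `|Ssum s| in h1 h2.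
have hc : (2 ^+ m)^-1 * S <= Num.sqrt m%:R.
  rewrite ler_pdivrMl ?exprn_gt0 //; by rewrite natrX in h2.
have hm : (m%:R)^-1 * ((2 ^+ m)^-1 * S) <= (Num.sqrt m%:R)^-1.
  rewrite ler_pdivrMl ?mR_gt0 //.
  apply: (le_trans hc).
  by rewrite ler_pdivlMr // -expr2 hss.
have -> : (2 * Num.sqrt (m%:R : R))^-1 = 2^-1 * (Num.sqrt m%:R)^-1 by rewrite invfM.
lra.
Qed.

End C.
From mathcomp Require Import finmap.
Local Open Scope classical_set_scope.

Section D.
Variable R : realType.

Lemma esum_ge_fin (T : choiceType) (F : finType) (e : F -> T) (I : set T)
    (a : T -> R) (A : pred F) :
  injective e -> (forall y, A y -> I (e y)) ->
  ((\sum_(y | A y) a (e y))%:E <= \esum_(i in I) (a i)%:E)%E.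
Proof.
move=> einj hI; apply: esum_ge.
exists [set` [seq e y | y <- enum A]].
  split; first exact: finite_seq.
  by move=> t /= /mapP [y]; rewrite mem_enum => /hI hy ->.
rewrite -fsbig_seq; last by rewrite map_inj_uniq // enum_uniq.
by rewrite big_map big_enum sumEFin.
Qed.

Lemma partial_mass (mu : nat -> R) (eta : R) :
  (forall i, 0 <= mu i) -> (\esum_(i in [set: nat]) (mu i)%:E = 1)%E -> 0 < eta ->
  exists N, 1 - eta <= \sum_(i < N) mu i <= 1.
Proof.
move=> mu0 h1 heta.
have : ((1 - eta)%:E < \esum_(i in [set: nat]) (mu i)%:E)%E.
  by rewrite h1 lte_fin; lra.
move=> /ereal_sup_gt [_ [X [finX _] <-]] hX.
pose F := fset_set X.
pose N := (\max_(k <- F) k)%N.+1.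
exists N; apply/andP; split.
  rewrite -lee_fin; apply: (le_trans (ltW hX)).
  rewrite fsbig_finite //.
  apply: (le_trans (lee_sum_fset_nat F N xpredT _ _)) => //.
  - by move=> i _; rewrite lee_fin.
  - move=> k /= kF; rewrite /N big_seq_fsetE /=.
    by rewrite -[k]/(val [`kF]%fset) ltnS leq_bigmax.
  by rewrite big_mkord sumEFin.
rewrite -lee_fin -h1.
have := @esum_ge_fin _ _ (fun i : 'I_N => val i) [set: nat] mu xpredT val_inj.
by apply.
Qed.

End D.

Section E.
Variable R : realType.

Lemma ln2_ge : 1/2 <= ln (2 : R).
Proof.
have h1 := expR_le_inv (u := 1/4 : R) ltac:(lra).
have h2 : expR (1/2 : R) = expR (1/4) * expR (1/4) by rewrite -expRD; congr expR; field.
have h3 : expR (1/2 : R) <= 2.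
  rewrite h2; have h0 := expR_ge0 (1/4 : R).
  have h4 : (1 - 1/4 : R)^-1 = 4/3 by field.
  rewrite h4 in h1; nra.
by rewrite -ler_expR lnK // posrE.
Qed.

Lemma bernoulli (M : R) k : 0 <= M -> 1 - k%:R * (1 - M) <= M ^+ k.
Proof.
move=> M0; elim: k => [|k IH]; first by rewrite expr0 mul0r subr0.
rewrite exprS -addn1 natrD mulrDl mul1r.
have h : M * (1 - k%:R * (1 - M)) <= M * M ^+ k by apply: ler_wpM2l.
have hk : 0 <= k%:R * (1 - M) ^+ 2 :> R by rewrite mulr_ge0 ?ler0n ?sqr_ge0.
have e : M * (1 - k%:R * (1 - M)) = 1 - (k%:R + 1) * (1 - M) + k%:R * (1 - M)^+2 by ring.
lra.
Qed.

Lemma numeric_key (u w : R) : 0 <= u -> 1/2 <= u ^+ 2 -> 0 <= w <= 1/24 ->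
  u ^+ 2 - 1/2 + 1/10 <= 10 * (3 * u - w - 1/2) ^+ 2 / 81.
Proof.
move=> u0 hu /andP[w0 w1].
have hu7 : 7/10 <= u by nra.
have hz : 3 * u - 13/24 <= 3 * u - w - 1/2 by lra.
have hz0 : 0 <= 3 * u - 13/24 by lra.
have hsq : (3 * u - 13/24) ^+ 2 <= (3 * u - w - 1/2) ^+ 2.
  rewrite !expr2; apply: ler_pM => //.
have e : 10 * (3 * u - 13/24) ^+ 2 - 81 * (u ^+ 2 - 1/2 + 1/10) =
   9 * (u - 65/36) ^+ 2 + 959/160 by field.
have := sqr_ge0 (u - 65/36).
lra.
Qed.

Lemma sq_ge7 (u : R) : 0 <= u -> 1/2 <= u^+2 -> 7/10 <= u.
Proof. move=> u0 hu; nra. Qed.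

End E.

Section Tail.
Variable R : realType.
Variables (n m : nat).
Hypothesis m_gt0 : (0 < m)%N.
Variable p : 'I_n -> R.
Hypothesis p_ge0 : forall i, 0 <= p i.
Hypothesis p_sum1 : \sum_i p i = 1.

Lemma tail_bound (delta tau : R) :
  0 < delta < 1 -> 0 <= tau -> Num.sqrt (m%:R) * tau <= 1/24 ->
  \sum_(x : {ffun 'I_m -> 'I_n} | ~~ (Gf p x <= 3 * Num.sqrt (ln (2 / delta) / m%:R) - tau))
     W p x <= 10/11 * delta.
Proof.
move=> /andP[d0 d1] t0 hw.
set c := 3 * Num.sqrt (ln (2 / delta) / m%:R).
have hWge0 : forall x : {ffun 'I_m -> 'I_n}, 0 <= W p x by move=> x; apply: W_ge0.
case: (lerP (2^-1) (c - tau)) => hc.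
  rewrite big_pred0; first by apply: mulr_ge0 => //; lra.
  move=> x; apply/negbTE; rewrite negbK; exact: le_trans (Gf_le m_gt0 p x) hc.
set v := Num.sqrt (m%:R : R).
have mR : 0 < m%:R :> R by rewrite ltr0n.
have v0 : 0 < v by rewrite sqrtr_gt0.
have vv : v ^+ 2 = m%:R by rewrite sqr_sqrtr // ltW.
set L := ln (2 / delta).
have hL : L = ln 2 - ln delta by rewrite /L ln_div // posrE.
have lnd : ln delta < 0 by rewrite ln_lt0 // d0 d1.
have l2 := @ln2_ge R.
have L0 : 0 <= L by lra.
set u := Num.sqrt L.
have uu : u ^+ 2 = L by rewrite sqr_sqrtr.
have u0 : 0 <= u by apply: sqrtr_ge0.
have cv : c * v = 3 * u.
  rewrite /c -mulrA -sqrtrM ?divr_ge0 ?ler0n // mulfVK // gt_eqF //.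
have EG := ExG_le m_gt0 p_ge0 p_sum1.
rewrite /Wp in EG.
set e1 := (2 * v)^-1 in EG.
set eps := c - tau - e1.
have ev : v * eps = 3 * u - v * tau - 1/2.
  rewrite /eps /e1 !mulrBr [v * c]mulrC cv; field; by rewrite gt_eqF.
have hu : 1/2 <= u ^+ 2 by rewrite uu; lra.
have hw0 : 0 <= v * tau by apply: mulr_ge0 => //; apply: ltW.
have hkey := numeric_key u0 hu (w := v * tau) ltac:(apply/andP; split => //).
have u7 : 7/10 <= u by apply: sq_ge7.
have eps0 : 0 <= eps.
  have hw' : v * tau <= 1/24 by exact: hw.
  have : 0 <= v * eps by rewrite ev; lra.
  by rewrite pmulr_rge0.
have e10 : 0 <= e1 by rewrite invr_ge0 mulr_ge0 // ltW.
have eps_le : eps <= 1/2 by rewrite /eps; lra.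
pose c0 : R := 3 / (2 * m%:R).
pose s : R := 20 * m%:R * eps / 81.
have s0 : 0 <= s by rewrite /s !mulr_ge0 // ltW.
have c00 : 0 <= c0 by rewrite /c0 divr_ge0 // mulr_ge0 // ltW.
have sc : s * c0 <= 1/5.
  have -> : s * c0 = 10 * eps / 27 by rewrite /s /c0; field; rewrite gt_eqF.
  lra.
apply: (le_trans (y := \sum_(x | eps <= Gf p x - Ex p (Gf p)) W p x)).
  rewrite [leLHS]big_mkcond [leRHS]big_mkcond; apply: ler_sum => x _.
  case: ifP => hb; last by case: ifP.
  rewrite ifT //.
  rewrite -ltNge in hb.
  rewrite /Ex; rewrite /eps; lra.
apply: (le_trans (chernoff p_ge0 p_sum1 eps s0 c00 sc (Gf_bdiff m_gt0 p))).
rewrite -expRD.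
have ex : - (s * eps) + 9/10 * s^+2 * c0^+2 * m%:R = - (10 * (v * eps)^+2 / 81).
  rewrite [(v * eps)^+2]exprMn vv /s /c0; field; by rewrite gt_eqF.
rewrite ex ev.
apply: (le_trans (y := expR (ln delta - 1/10))).
  rewrite ler_expR; rewrite uu in hkey; lra.
rewrite expRD lnK ?posrE // mulrC ler_wpM2r //; first exact: ltW.
rewrite expRN.
have h11 := expR_ge1Dx (1/10 : R).
rewrite -[X in _ <= X]invrK lef_pV2 ?posrE ?expR_gt0 //; first lra.
Qed.

End Tail.
Local Open Scope classical_set_scope.

Lemma X_inj (n m : nat) : injective (@X n m).
Proof.
move=> x y h; apply/ffunP => t.
have := congr1 (fun f : {ffun 'I_m -> nat} => f t) h.
by rewrite /X !ffunE => /val_inj.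
Qed.

Lemma sqrt_le_self (R : realType) (a : R) : 1 <= a -> Num.sqrt a <= a.
Proof.
move=> a1; have v0 : 0 <= Num.sqrt a := sqrtr_ge0 a.
have vv : Num.sqrt a ^+ 2 = a by rewrite sqr_sqrtr //; lra.
nra.
Qed.

Lemma final_num (R : realType) (delta A B : R) : 0 < delta < 1 ->
  1 - delta / 12 <= A -> B <= 10/11 * delta -> 1 - delta <= A * (1 - B).
Proof.
move=> /andP[d0 d1] hA hB.
have h1 : 0 <= 1 - delta / 12 by lra.
have h2 : 0 <= 1 - 10/11 * delta by lra.
have h3 : (1 - delta / 12) * (1 - 10/11 * delta) <= A * (1 - B).
  by apply: ler_pM => //; lra.
have e : (1 - delta / 12) * (1 - 10/11 * delta) = 1 - 131/132 * delta + 10/132 * delta ^+ 2.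
  by field.
have := sqr_ge0 delta.
lra.
Qed.

Theorem lemma3 (R : realType) (m : nat) (delta : R) (mu : nat -> R) :
  (0 < m)%N -> 0 < delta < 1 -> is_distrN mu ->
  (prob_prod mu
     [set x : {ffun 'I_m -> nat} |
        (tv_dist (emp x) mu >=
         ((2 : R)^-1 * emp_rademacher x
          - 3 * Num.sqrt (ln (2 / delta) / m%:R))%:E)%E]
   >= (1 - delta)%:E)%E.
Proof.
move=> m0 /andP[d0 d1] [mu0 mu00 mu1].
have mR : 0 < m%:R :> R by rewrite ltr0n.
have m1 : 1 <= m%:R :> R by rewrite ler1n.
set eta := delta / (12 * m%:R).
have eta0 : 0 < eta by rewrite divr_gt0 // mulr_gt0.
have etaE : eta * (12 * m%:R) = delta by rewrite /eta mulfVK // gt_eqF // mulr_gt0.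
have [N /andP[hM1 hM2]] := partial_mass mu0 mu1 eta0.
set M := \sum_(i < N) mu i in hM1 hM2.
have eta_le : eta <= delta / 12 by nra.
have M0 : 0 < M by lra.
pose p := fun i : 'I_N => mu (val i) / M.
have p0 : forall i, 0 <= p i by move=> i; rewrite divr_ge0 // ltW.
have psum : \sum_i p i = 1 by rewrite -mulr_suml mulfV // gt_eqF.
set tau := (1 - M) / 2.
set c := 3 * Num.sqrt (ln (2 / delta) / m%:R).
set Ev := [set x : {ffun 'I_m -> nat} | _].
have sub : forall x : {ffun 'I_m -> 'I_N}, Gf p x <= c - tau -> Ev (X x).
  move=> x hx; rewrite /Ev /= /tv_dist.
  have h1 := @esum_ge_fin R _ _ (fun i : 'I_N => val i) [set: nat]
     (fun i => `|emp (X x) i - mu i|) xpredT val_inj (fun _ _ => I).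
  have h2 : (0 <= ((2 : R)^-1)%:E)%E by rewrite lee_fin.
  apply: le_trans (lee_wpmul2l h2 h1).
  rewrite -EFinM lee_fin.
  have hTV : TVp p x <= 2^-1 * \sum_(i : 'I_N) `|emp (X x) (val i) - mu (val i)| + tau.
    rewrite /TVp /tau.
    have hpm : forall i : 'I_N, mu (val i) <= p i.
      move=> i; rewrite /p ler_pdivlMr // ler_piMr //.
    have hs : \sum_(i : 'I_N) (p i - mu (val i)) = 1 - M by rewrite sumrB psum.
    apply: (le_trans (y := 2^-1 * \sum_(i : 'I_N)
         (`|emp (X x) (val i) - mu (val i)| + (p i - mu (val i))))).
      apply: ler_wpM2l => //; apply: ler_sum => i _.
      have -> : emp (X x) (val i) - p i = (emp (X x) (val i) - mu (val i)) + (mu (val i) - p i)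
        by ring.
      apply: (le_trans (ler_normD _ _)); rewrite lerD2l ler0_norm ?opprB //.
      by have := hpm i; lra.
    rewrite big_split /= hs; lra.
  move: hx; rewrite /Gf /Rad; lra.
have step1 := @esum_ge_fin R _ _ (@X N m) Ev (fun x => \prod_(t < m) mu (x t))
   (fun x => Gf p x <= c - tau) (@X_inj N m) sub.
apply: (le_trans _ step1); rewrite lee_fin.
have e2 : \sum_(x | Gf p x <= c - tau) \prod_(t < m) mu (X x t) =
    M ^+ m * (1 - \sum_(x : {ffun 'I_m -> 'I_N} | ~~ (Gf p x <= c - tau)) W p x).
  have hW := sumW psum m.
  rewrite -[X in _ * (X - _)]hW [X in _ * (X - _)](bigID (fun x => Gf p x <= c - tau)) /= addrK mulr_sumr.
  apply: eq_bigr => x _; rewrite /W (_ : M ^+ m = \prod_(t < m) M); last by rewrite prodr_const card_ord.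
  rewrite -big_split /=.
  apply: eq_bigr => t _; rewrite /X ffunE /p mulrC mulfVK // gt_eqF //.
rewrite e2.
have tau0 : 0 <= tau by rewrite /tau; lra.
have hw : Num.sqrt (m%:R) * tau <= 1/24.
  have hv := sqrt_le_self m1.
  have ht : m%:R * tau <= delta / 24.
    have : tau <= eta / 2 by rewrite /tau; lra.
    move=> h; apply: (le_trans (ler_wpM2l (ltW mR) h)).
    have -> : m%:R * (eta / 2) = (eta * (12 * m%:R)) / 24 by field.
    by rewrite etaE.
  apply: (le_trans (ler_wpM2r tau0 hv)); lra.
have hB := tail_bound m0 p0 psum (delta := delta) (tau := tau) ltac:(apply/andP; split => //) tau0 hw.
apply: final_num => //; first by apply/andP.
apply: (le_trans _ (bernoulli m (ltW M0))).
have : m%:R * (1 - M) <= delta / 12.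
  have : 1 - M <= eta by lra.
  move=> h; apply: (le_trans (ler_wpM2l (ltW mR) h)).
  have -> : m%:R * eta = (eta * (12 * m%:R)) / 12 by field.
  by rewrite etaE.
lra.
Qed.
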